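(* The parameterized problem Multicolored Independent Set does not belong to LOCAL-FPT. That is, there is no computable function $f$ and no LOCAL algorithm that, on every instance $(G,k)$ of Multicolored Independent Set, terminates within $f(k)$ rounds and decides correctly (with disjunctive acceptance) whether $(G,k)$ is a yes-instance.
   Context: Distributed models. A network is a finite connected undirected graph $G$ with $n=|V(G)|$ nodes; every node has a unique identifier of $O(\log n)$ bits. Initially each node knows only its own identifier, the identifiers of its neighbours, its own input labels, and the parameter $k$. Computation proceeds in synchronous rounds; in each round each node performs arbitrary local computation, sends messages and receives the messages sent to it. In the LOCAL model messages to neighbours have unbounded size. The running time is the number of rounds until all nodes have terminated. For $s,t\in\mathbb N$, $\mathcal G_{s,t}$ denotes the set of finite connected graphs $G$ equipped with unary predicates $P_1,\dots,P_s\subseteq V(G)$ and binary predicates $E_1,\dots,E_t\subseteq V(G)^2$. A parameterized decision problem is a set $\mathsf P\subseteq\mathcal G_{s,t}\times\mathbb N$; instances are pairs $(G,k)$, $k$ being the parameter. A distributed algorithm decides $\mathsf P$ if on every instance $(G,k)$ (run on network $G$, every node knowing $k$) every node terminates with output accept or reject, and $(G,k)\in\mathsf P$ iff at least one node accepts. LOCAL-FPT is the class of parameterized problems decided by a LOCAL algorithm that terminates within $f(k)$ rounds on every instance $(G,k)$, for some computable function $f$. Multicolored Independent Set: an instance is an integer $k\ge 1$ and a graph $G\in\mathcal G_{k,1}$ (the binary predicate being the edge relation), where each vertex lies in at most one of the colour classes $P_1,\dots,P_k$; it is a yes-instance iff there are vertices $v_1\in P_1,\dots,v_k\in P_k$ that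 are pairwise non-adjacent. The parameter is $k$. *)

(* Defs.v *)
From mathcomp Require Import all_boot.
Set Implicit Arguments. Unset Strict Implicit. Unset Printing Implicit Defensive.

Inductive code : Type :=
| CZero
| CSucc
| CProj of nat                (* i-th argument (0-based) *)
| CComp of code & seq code
| CPrec of code & code        (* primitive recursion on the first argument *)
| CMu of code.                (* unbounded minimisation on the first argument *)

Inductive eval : code -> seq nat -> nat -> Prop :=
| eZero xs : eval CZero xs 0
| eSucc x xs : eval CSucc (x :: xs) x.+1
| eProj i xs : i < size xs -> eval (CProj i) xs (nth 0 xs i)
| eComp g hs xs ys y : evals hs xs ys -> eval g ys y -> eval (CComp g hs) xs y
| ePrec0 g h xs y : eval g xs y -> eval (CPrec g h) (0 :: xs) y
| ePrecS g h n xs r y :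
    eval (CPrec g h) (n :: xs) r -> eval h (n :: r :: xs) y ->
    eval (CPrec g h) (n.+1 :: xs) y
| eMu g xs n : eval g (n :: xs) 0 -> evalsPos g xs n -> eval (CMu g) xs n
with evals : seq code -> seq nat -> seq nat -> Prop :=
| evNil xs : evals [::] xs [::]
| evCons h hs xs y ys : eval h xs y -> evals hs xs ys -> evals (h :: hs) xs (y :: ys)
(* evalsPos g xs n : g(m, xs) is defined and nonzero for every m < n *)
with evalsPos : code -> seq nat -> nat -> Prop :=
| epZ g xs : evalsPos g xs 0
| epS g xs n y : evalsPos g xs n -> eval g (n :: xs) y.+1 -> evalsPos g xs n.+1.

Definition computable (f : nat -> nat) : Prop :=
  exists c : code, forall n, eval c [:: n] (f n).

(* A network: finite connected simple graph on a finType V (edge relation adj,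
   which is also the binary predicate E_1), colour classes P_1..P_k given as
   P : 'I_k -> pred V (P i is P_(i+1)), each vertex in at most one class. *)
Definition mis_instance (k : nat) (V : finType) (adj : rel V) (P : 'I_k -> pred V) : Prop :=
  [/\ 1 <= k, 0 < #|V|,
      (forall u v, adj u v = adj v u) /\ (forall v, ~~ adj v v),
      (forall u v, connect adj u v) &
      (forall v (i j : 'I_k), P i v -> P j v -> i = j)].

Definition mis_yes (k : nat) (V : finType) (adj : rel V) (P : 'I_k -> pred V) : Prop :=
  exists f : 'I_k -> V,
    (forall i, P i (f i)) /\ (forall i j, i != j -> ~~ adj (f i) (f j)).

(* Identifiers: injective, of O(log n) bits, i.e. below n^c. *)
Definition valid_ids (c : nat) (V : finType) (id : V -> nat) : Prop :=
  injective id /\ forall v, id v < #|V| ^ c.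

(* A node's state space and message space are arbitrary (unbounded messages,
   arbitrary local computation). Initially a node knows k, its identifier, the
   (sorted) list of its neighbours' identifiers and its input labels
   [:: v \in P_1; ...; v \in P_k].  In each round every non-terminated node
   sends to each neighbour (addressed by identifier) a message computed from its
   state, receives the list of (sender id, message) pairs from its active
   neighbours (sorted by sender id) and updates its state.  A node has
   terminated once [output] of its state is [Some b] (b = accept); terminated
   nodes keep their state and send nothing. *)
Record LocalAlg := {
  St : Type;
  Msg : Type;
  init : nat -> nat -> seq nat -> seq bool -> St;   (* k, id, nbr ids, labels *)
  send : St -> nat -> Msg;                         (* state, recipient id *)
  step : St -> seq (nat * Msg) -> St;
  output : St -> option bool }.
Arguments init : clear implicits.
Arguments send : clear implicits.
Arguments step : clear implicits.
Arguments output : clear implicits.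

Section Run.
Variables (A : LocalAlg) (k : nat) (V : finType) (adj : rel V) (P : 'I_k -> pred V)
          (id : V -> nat).

Definition labels (v : V) : seq bool := [seq P i v | i <- enum 'I_k].

Definition nbr_ids (v : V) : seq nat := sort leq [seq id u | u <- enum V & adj v u].

Definition sorted_nbrs (v : V) : seq V :=
  sort (fun u w => id u <= id w) [seq u <- enum V | adj v u].

Fixpoint state (r : nat) : V -> St A :=
  match r with
  | 0 => fun v => init A k (id v) (nbr_ids v) (labels v)
  | r'.+1 =>
      let prev := state r' in
      fun v =>
        let s := prev v in
        if output A s is Some _ then s
        else step A s [seq (id u, send A (prev u) (id v)) |
                        u <- sorted_nbrs v & output A (prev u) == None]
  end.

Definition decides_within (T : nat) (yes : Prop) : Prop :=
  (forall v, output A (state T v) <> None) /\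
  (yes <-> exists v, output A (state T v) = Some true).
End Run.

(* Main.v *)
Require Import Defs.
From mathcomp Require Import all_boot.
From mathcomp Require Import zify.
Set Implicit Arguments. Unset Strict Implicit. Unset Printing Implicit Defensive.

Section Loc.
Variables (A : LocalAlg) (k : nat) (V : finType) (adj : rel V) (P1 P2 : 'I_k -> pred V)
          (id : V -> nat).

Fixpoint good (r : nat) (v : V) : Prop :=
  (forall i, P1 i v = P2 i v) /\
  match r with 0 => True | r'.+1 => forall u, adj v u -> good r' u end.

Lemma good_mono r v : good r.+1 v -> good r v.
Proof.
elim: r v => [|r IH] v [Ha Hn]; split => //.
by move=> u /Hn /IH.
Qed.

Lemma locality r v : good r v -> state A adj P1 id r v = state A adj P2 id r v.
Proof.
elim: r v => [|r IH] v.
  move=> [Ha _] /=; congr (init _ _ _ _ _).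
  by rewrite /labels; apply: eq_map => i; rewrite Ha.
move=> Hg; have Hv := IH v (good_mono Hg).
case: Hg => _ Hn.
have E : forall u, u \in sorted_nbrs adj id v ->
    state A adj P1 id r u = state A adj P2 id r u.
  move=> u; rewrite /sorted_nbrs mem_sort mem_filter => /andP [Hu _].
  exact: IH (Hn u Hu).
rewrite /= Hv.
case: (output A _) => // .
congr (step _ _ _).
rewrite (@eq_in_filter _ (fun u => output A (state A adj P1 id r u) == None)
                        (fun u => output A (state A adj P2 id r u) == None)); last first.
  by move=> u Hu; rewrite E.
apply/eq_in_map => u; rewrite mem_filter => /andP [_ Hu].
by rewrite E.
Qed.
End Loc.

Definition padj N : rel 'I_N := fun u v => (u.+1 == v :> nat) || (v.+1 == u :> nat).
Definition Pg N (ba bb : bool) : 'I_2 -> pred 'I_N := fun i v =>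
  if (i : nat) == 0 then ba && ((v : nat) == 0) else bb && ((v : nat) == N.-1).


Arguments padj : clear implicits.
Arguments Pg : clear implicits.

Lemma padj_conn0 N (H : 0 < N) (u : 'I_N) : connect (padj N) (Ordinal H) u.
Proof.
case: u => m Hm.
elim: m Hm => [|m IH] Hm.
  by rewrite (_ : Ordinal Hm = Ordinal H) //; apply: val_inj.
have Hm' : m < N by lia.
apply: connect_trans (IH Hm') _.
apply: connect1; rewrite /padj /=; by rewrite eqxx.
Qed.

Lemma inst N ba bb : 3 <= N -> mis_instance (padj N) (Pg N ba bb).
Proof.
move=> HN; have H0 : 0 < N by lia.
split => //.
- by rewrite card_ord; lia.
- split => [u v|v]; first by rewrite /padj orbC.
  by rewrite /padj; apply/negP => /orP [] /eqP; lia.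
- move=> u v.
  have Hs : connect_sym (padj N) by apply: sym_connect_sym => x y; rewrite /padj orbC.
  apply: connect_trans (padj_conn0 H0 v).
  by rewrite Hs; apply: padj_conn0.
- move=> v i j; rewrite /Pg.
  case: i => [[|[|i]] Hi] //; case: j => [[|[|j]] Hj] //= ;
    try (by move=> *; apply: val_inj).
  + by move=> /andP [_ /eqP a] /andP [_ /eqP b]; lia.
  + by move=> /andP [_ /eqP a] /andP [_ /eqP b]; lia.
Qed.

Lemma ids c N : 1 <= c -> valid_ids c (fun v : 'I_N => (v : nat)).
Proof.
move=> Hc; split; first exact: val_inj.
move=> v; rewrite card_ord.
have Hv := ltn_ord v.
apply: (leq_trans Hv).
have HN : 0 < N by lia.
by rewrite -{1}(expn1 N) leq_pexp2l.
Qed.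

Lemma good1 N r (v : 'I_N) : r < v -> good (padj N) (Pg N true true) (Pg N false true) r v.
Proof.
elim: r v => [|r IH] v Hv; split.
- move=> i; rewrite /Pg; case: ifP => // _.
  by have -> : ((v : nat) == 0) = false by apply/eqP; lia.
- done.
- move=> i; rewrite /Pg; case: ifP => // _.
  by have -> : ((v : nat) == 0) = false by apply/eqP; lia.
- move=> u; rewrite /padj => /orP [] /eqP Hu; apply: IH; lia.
Qed.

Lemma good2 N r (v : 'I_N) : v + r < N.-1 ->
  good (padj N) (Pg N true true) (Pg N true false) r v.
Proof.
elim: r v => [|r IH] v Hv; split.
- move=> i; rewrite /Pg; case: ifP => // _.
  by have -> : ((v : nat) == N.-1) = false by apply/eqP; lia.
- done.
- move=> i; rewrite /Pg; case: ifP => // _.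
  by have -> : ((v : nat) == N.-1) = false by apply/eqP; lia.
- move=> u; rewrite /padj => /orP [] /eqP Hu; apply: IH; lia.
Qed.

Theorem mainTheorem1 :
  forall c : nat, 1 <= c ->
  ~ exists (f : nat -> nat) (A : LocalAlg),
      computable f /\
      forall (k : nat) (V : finType) (adj : rel V) (P : 'I_k -> pred V) (id : V -> nat),
        mis_instance adj P -> valid_ids c id ->
        decides_within A adj P id (f k) (mis_yes adj P).
Proof.
move=> c Hc [f [A [_ H]]].
set T := f 2.
set N := T.*2.+3.
have HN : 3 <= N by rewrite /N; lia.
have H0 : 0 < N by lia.
have Hmax : N.-1 < N by lia.
have Hy : mis_yes (padj N) (Pg N true true).
  exists (fun i : 'I_2 => if (i : nat) == 0 then Ordinal H0 else Ordinal Hmax).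
  split.
    by case=> [[|[|i]] Hi] //=; rewrite /Pg /=.
  case=> [[|[|i]] Hi] //; case=> [[|[|j]] Hj] //= _; rewrite /padj /=;
    apply/negP => /orP [] /eqP; rewrite /N; lia.
have [_ Hiff] := H 2 _ _ _ _ (inst true true HN) (ids N Hc).
have [v Hv] := Hiff.1 Hy.
case: (ltnP T v) => HTv.
- have E := locality A (fun w : 'I_N => (w : nat)) (good1 HTv).
  have [_ Hiff2] := H 2 _ _ _ _ (inst false true HN) (ids N Hc).
  have [g [Hg _]] : mis_yes (padj N) (Pg N false true).
    by apply: Hiff2.2; exists v; rewrite -E.
  by move: (Hg ord0); rewrite /Pg.
- have Hr : v + T < N.-1 by move: (nat_of_ord v) HTv; rewrite /N => m Hm; lia.
  have E := locality A (fun w : 'I_N => (w : nat)) (good2 Hr).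
  have [_ Hiff2] := H 2 _ _ _ _ (inst true false HN) (ids N Hc).
  have [g [Hg _]] : mis_yes (padj N) (Pg N true false).
    by apply: Hiff2.2; exists v; rewrite -E.
  by move: (Hg (Ordinal (isT : 1 < 2))); rewrite /Pg.
Qed.
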